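(* Let $R=S(M_0)$ and $L=\mathcal{A}M_{-1}=S(M_0)\otimes M_{-1}$, viewed as an $R$-module via $\mathbf y\cdot(\mathbf y'\odot x^{\mathbf k})=\mathbf y\odot\mathbf y'\odot x^{\mathbf k}$. Equip $L$ with the bilinear product $\rhd$, with $\nabla\colon L\to \mathrm{End}_{\mathbb K}(L)$, $\nabla_X Y=X\rhd Y$, and with the anchor $\rho\colon L\to \mathrm{Der}_{\mathbb K}(S(M_0),S(M_0))$, $\rho(X)(\mathbf y)=X\rhd \mathbf y$. Then $(L,\nabla,\rho)$ is a pre-Lie-Rinehart algebra over $R$, the Lie bracket being $[X,Y]=X\rhd Y-Y\rhd X$.
   Context: Fix a field $\mathbb K$ and a finite set $C$ of decorations. Let $\overline N(C)$ be the commutative polynomial algebra over $\mathbb K$ in the variables $x^a_j$, $a\in C$, $j\in\{-1,0,1,2,\dots\}$. A monomial is $x^{\mathbf k}=\prod_{j,a}(x^a_j)^{k^a_j}$ with finitely supported nonnegative integer exponents; its weight is $\mathrm{wt}(x^{\mathbf k})=\sum_{j,a} j\,k^a_j$. Let $\partial$ be the derivation of $\overline N(C)$ with $\partial x^a_j=x^a_{j+1}$. For $n\in\{-1,0\}$ let $M_n$ be the span of the monomials of weight $n$ (non-constant ones for $n=0$). $S(V)$ denotes the symmetric algebra of $V$, with product $\odot$ and unit $\mathbf 1$; elements of $S(M_0)$ are called multiaromas. Elements of $\mathcal{A}M_{-1}$ are spanned by $\mathbf y\odot x^{\mathbf k}$ with $\mathbf y\in S(M_0)$ a product of monomials and $x^{\mathbf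 k}\in M_{-1}$. The product $\rhd$ is defined (and extended bilinearly) as follows. For monomials $x^{\mathbf k}\in M_{-1}$ and $P\in M_0\cup M_{-1}$, $x^{\mathbf k}\rhd P=x^{\mathbf k}\cdot\partial P$ (product in $\overline N(C)$). For $\mathbf y=x^{\kappa^1}\odot\cdots\odot x^{\kappa^m}\in S(M_0)$: $x^{\mathbf k}\rhd \mathbf y=\sum_{i=1}^m x^{\kappa^1}\odot\cdots\odot (x^{\mathbf k}\rhd x^{\kappa^i})\odot\cdots\odot x^{\kappa^m}$ and $(\mathbf y^1\odot x^{\mathbf k})\rhd \mathbf y=\mathbf y^1\odot(x^{\mathbf k}\rhd\mathbf y)$. Finally $(\mathbf y^1\odot x^{\mathbf k^1})\rhd(\mathbf y^2\odot x^{\mathbf k^2})=\mathbf y^1\odot(x^{\mathbf k^1}\rhd\mathbf y^2)\odot x^{\mathbf k^2}+\mathbf y^1\odot\mathbf y^2\odot(x^{\mathbf k^1}\rhd x^{\mathbf k^2})$. Definition: given a unital commutative $\mathbb K$-algebra $R$ and an $R$-module $L$ with an $R$-linear map $\rho\colon L\to\mathrm{Der}_{\mathbb K}(R,R)$ and a map $\nabla\colon L\to\mathrm{End}_{\mathbb K}(L)$, write $X\rhd Y=\nabla_XY$ and $[X,Y]=X\rhd Y-Y\rhd X$. Then $L$ is a pre-Lie-Rinehart algebra if: $(L,[-,-])$ is a Lie algebra over $\mathbb K$; $\rho$ is a Lie algebra homomorphism; for $f\in R$, $X,Y\in L$, $[X,fY]=(\rho(X)f)Y+f[X,Y]$; and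 $(L,\rhd)$ is pre-Lie: $X\rhd(Y\rhd Z)-(X\rhd Y)\rhd Z=Y\rhd(X\rhd Z)-(Y\rhd X)\rhd Z$. *)

(* Defs.v *)
From HB Require Import structures.
From mathcomp Require Import all_boot all_order all_algebra.
From mathcomp Require Import finmap.
From mathcomp.multinomials Require Import monalg.

Set Implicit Arguments.
Unset Strict Implicit.
Unset Printing Implicit Defensive.

Import Order.TTheory GRing.Theory Num.Theory.
Local Open Scope ring_scope.

Section PreLieRinehart.
Variables (K : fieldType) (R : comAlgType K) (L : lmodType R).

Definition Kscale (a : K) (v : L) : L := (a%:A : R) *: v.

Definition is_Kderivation (D : R -> R) : Prop :=
  (forall (a : K) (f g : R), D (a *: f + g) = a *: D f + D g) /\
  (forall f g : R, D (f * g) = D f * g + f * D g).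

Definition bracket (nabla : L -> L -> L) (X Y : L) : L := nabla X Y - nabla Y X.

Record pre_Lie_Rinehart (rho : L -> R -> R) (nabla : L -> L -> L) : Prop := {
  plr_rho_der : forall X, is_Kderivation (rho X);
  plr_rho_Rlinear : forall (f : R) (X Y : L) (g : R),
      rho (f *: X + Y) g = f * rho X g + rho Y g;
  plr_nabla_Klinear : forall X (a : K) Y Z,
      nabla X (Kscale a Y + Z) = Kscale a (nabla X Y) + nabla X Z;
  plr_bracket_linl : forall (a : K) X Y Z,
      bracket nabla (Kscale a X + Y) Z
      = Kscale a (bracket nabla X Z) + bracket nabla Y Z;
  plr_bracket_linr : forall (a : K) X Y Z,
      bracket nabla X (Kscale a Y + Z)
      = Kscale a (bracket nabla X Y) + bracket nabla X Z;
  plr_bracket_alt : forall X, bracket nabla X X = 0;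
  plr_bracket_Jacobi : forall X Y Z,
      bracket nabla X (bracket nabla Y Z) + bracket nabla Y (bracket nabla Z X)
      + bracket nabla Z (bracket nabla X Y) = 0;
  plr_rho_Lie : forall X Y (f : R),
      rho (bracket nabla X Y) f = rho X (rho Y f) - rho Y (rho X f);
  plr_Leibniz : forall X (f : R) Y,
      bracket nabla X (f *: Y) = rho X f *: Y + f *: bracket nabla X Y;
  plr_preLie : forall X Y Z,
      nabla X (nabla Y Z) - nabla (nabla X Y) Z
      = nabla Y (nabla X Z) - nabla (nabla Y X) Z
}.

End PreLieRinehart.

(* The variable x^a_j (a in C, j >= -1) is encoded as the pair (a, n) with   *)
(* j = n - 1.                                                                *)
Definition var (C : finType) : choiceType := (C * nat)%type.

Notation mon C := {cmonom (var C)}.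

Notation Nbar K C := {malg K[mon C]}.

Definition wt (C : finType) (m : mon C) : int :=
  \sum_(v <- finsupp m) (m v)%:Z * ((v.2)%:Z - 1).

Definition is_M0mon (C : finType) (m : mon C) : bool :=
  (wt m == 0) && (m != @onecm (var C)).
Definition is_Mm1mon (C : finType) (m : mon C) : bool := wt m == -1.

Definition M0mon (C : finType) := {m : mon C | is_M0mon m}.
Definition Mm1mon (C : finType) := {m : mon C | is_Mm1mon m}.

(* R = S(M_0): polynomial algebra on the monomial basis of M_0; its product
   is the symmetric product (.) and its unit is 1 *)
Notation multiaroma K C := {malg K[{cmonom (M0mon C)}]}.

(* L = A M_{-1} = S(M_0) (x) M_{-1}: the free S(M_0)-module on the monomial
   basis of M_{-1}; << y *g x^k >> stands for y (.) x^k *)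
Notation AM K C := {malg (multiaroma K C)[Mm1mon C]}.

Section Products.
Variables (K : fieldType) (C : finType).

Definition shiftv (v : var C) : var C := (v.1, v.2.+1).

Definition dmon (m : mon C) : Nbar K C :=
  \sum_(v <- finsupp m) << mulcm (divcm m (ucm v)) (ucm (shiftv v)) >> *+ m v.

Definition deriv (p : Nbar K C) : Nbar K C :=
  \sum_(m <- msupp p) p@_m *: dmon m.

(* M_0 -> S(M_0) (inclusion as degree one part; used on elements of M_0) *)
Definition toS1 (p : Nbar K C) : multiaroma K C :=
  \sum_(m <- msupp p)
     p@_m *: (if (insub m : option (M0mon C)) is Some m0 then << ucm m0 >>
              else 0).

(* M_{-1} -> A M_{-1}, x^k |-> 1 (.) x^k (used on elements of M_{-1}) *)
Definition toL1 (p : Nbar K C) : AM K C :=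
  \sum_(m <- msupp p)
     (if (insub m : option (Mm1mon C)) is Some m1 then << (p@_m)%:A *g m1 >>
      else 0).

Definition act_mon0 (k : Mm1mon C) (kappa : M0mon C) : multiaroma K C :=
  toS1 (<< val k >> * deriv << val kappa >>).

Definition act_aroma (k : Mm1mon C) (y : {cmonom (M0mon C)}) : multiaroma K C :=
  \sum_(kappa <- finsupp y) (<< divcm y (ucm kappa) >> * act_mon0 k kappa) *+ y kappa.

Definition act_S (k : Mm1mon C) (f : multiaroma K C) : multiaroma K C :=
  \sum_(y <- msupp f) f@_y *: act_aroma k y.

Definition rhoAM (X : AM K C) (f : multiaroma K C) : multiaroma K C :=
  \sum_(k <- msupp X) X@_k * act_S k f.

Definition act_mon1 (k1 k2 : Mm1mon C) : AM K C :=
  toL1 (<< val k1 >> * deriv << val k2 >>).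

Definition nablaAM (X Y : AM K C) : AM K C :=
  \sum_(k1 <- msupp X) \sum_(k2 <- msupp Y)
     X@_k1 *: (<< act_S k1 Y@_k2 *g k2 >> + Y@_k2 *: act_mon1 k1 k2).

End Products.

(* Main.v *)
Require Import Defs.
From HB Require Import structures.
From mathcomp Require Import all_boot all_order all_algebra.
From mathcomp Require Import finmap.
From mathcomp.multinomials Require Import monalg.
Set Implicit Arguments.
Unset Strict Implicit.
Unset Printing Implicit Defensive.
Import Order.TTheory GRing.Theory Num.Theory.
Local Open Scope fset_scope.
Local Open Scope ring_scope.
Local Notation "1" := (@mone _) : monom_scope.
Local Notation "x * y" := (mmul x y) : monom_scope.
From mathcomp Require Import zify.

Section Ext.
Variables (I : choiceType) (G W : zmodType).
Fact ext_key : unit. Proof. by []. Qed.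
Definition ext_def (F : I -> G -> W) (g : {malg G[I]}) : W :=
  \sum_(k <- msupp g) F k g@_k.
Definition ext := locked_with ext_key ext_def.
Canonical ext_unlockable := [unlockable fun ext].
Lemma extE F g : ext F g = \sum_(k <- msupp g) F k g@_k.
Proof. by rewrite unlock. Qed.

Lemma malg_ind (P : {malg G[I]} -> Prop) :
  P 0 -> (forall a b, P a -> P b -> P (a + b)) ->
  (forall c k, P << c *g k >>) -> forall g, P g.
Proof.
move=> P0 PD PU g; rewrite (monalgE g); apply: big_ind => //.
Qed.

Variable F : I -> G -> W.
Hypothesis FB : forall k x y, F k (x - y) = F k x - F k y.
Lemma F0 k : F k 0 = 0.
Proof. by rewrite -(subrr 0) FB subrr. Qed.
Lemma FD k x y : F k (x + y) = F k x + F k y.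
Proof.
have FN z : F k (- z) = - F k z by rewrite -sub0r FB F0 sub0r.
have -> : x + y = x - - y by rewrite opprK.
by rewrite FB FN opprK.
Qed.

Lemma extEw d g : msupp g `<=` d -> ext F g = \sum_(k <- d) F k g@_k.
Proof.
move=> le; rewrite !extE (big_fset_incl _ le) //= => x _ /mcoeff_outdom ->.
exact: F0.
Qed.
Lemma extU c k : ext F << c *g k >> = F k c.
Proof. by rewrite (extEw msuppU_le) big_seq_fset1 mcoeffUU. Qed.
Lemma ext0 : ext F 0 = 0.
Proof. by rewrite !extE msupp0 big_seq_fset0. Qed.
Lemma extD g1 g2 : ext F (g1 + g2) = ext F g1 + ext F g2.
Proof.
rewrite (extEw (msuppD_le _ _)) (extEw (d := msupp g1 `|` msupp g2) (g := g1) (fsubsetUl _ _)).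
rewrite (extEw (d := msupp g1 `|` msupp g2) (g := g2) (fsubsetUr _ _)) -big_split /=.
by apply: eq_bigr => k _; rewrite mcoeffD FD.
Qed.
Lemma extN g : ext F (- g) = - ext F g.
Proof. by apply/eqP; rewrite -subr_eq0 opprK -extD addNr ext0. Qed.
Lemma extB g1 g2 : ext F (g1 - g2) = ext F g1 - ext F g2.
Proof. by rewrite extD extN. Qed.
End Ext.

Lemma ext_eqF (I : choiceType) (G W : zmodType) (F1 F2 : I -> G -> W) g :
  (forall k c, F1 k c = F2 k c) -> ext F1 g = ext F2 g.
Proof. by move=> h; rewrite !extE; apply: eq_bigr => k _; rewrite h. Qed.

Section ExtZ.
Variables (R : ringType) (I : choiceType) (W : lmodType R) (F : I -> R -> W).
Hypothesis FB : forall k x y, F k (x - y) = F k x - F k y.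
Hypothesis FZ : forall k a c, F k (a * c) = a *: F k c.
Lemma extZ (a : R) (g : {malg R[I]}) : ext F (a *: g) = a *: ext F g.
Proof.
rewrite (extEw FB (msuppZ_le _ _)) extE scaler_sumr.
by apply: eq_bigr => k _; rewrite mcoeffZ FZ.
Qed.
End ExtZ.

Lemma monalgUZ (I : choiceType) (R : ringType) (c : R) (k : I) :
  << c *g k >> = c *: << k >>.
Proof. by apply/malgP => k'; rewrite mcoeffZ !mcoeffU mulrnAr mulr1. Qed.


Section GenSteps.
Variable (R : pzRingType) (D : R -> R).
Lemma stepZ q : D 0 = 0 -> D (0 * q) = D 0 * q + 0 * D q.
Proof. by move=> h; rewrite !mul0r h mul0r addr0. Qed.
Lemma stepZr p : D 0 = 0 -> D (p * 0) = D p * 0 + p * D 0.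
Proof. by move=> h; rewrite !mulr0 h mulr0 addr0. Qed.
Lemma stepL p1 p2 q : (forall a b, D (a + b) = D a + D b) ->
  D (p1 * q) = D p1 * q + p1 * D q -> D (p2 * q) = D p2 * q + p2 * D q ->
  D ((p1 + p2) * q) = D (p1 + p2) * q + (p1 + p2) * D q.
Proof. by move=> HD h1 h2; rewrite mulrDl HD h1 h2 HD mulrDl mulrDl addrACA. Qed.
Lemma stepR p q1 q2 : (forall a b, D (a + b) = D a + D b) ->
  D (p * q1) = D p * q1 + p * D q1 -> D (p * q2) = D p * q2 + p * D q2 ->
  D (p * (q1 + q2)) = D p * (q1 + q2) + p * D (q1 + q2).
Proof. by move=> HD h1 h2; rewrite mulrDr HD h1 h2 HD mulrDr mulrDr addrACA. Qed.
End GenSteps.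

Lemma base_gen (K : comNzRingType) (A : comAlgType K) (D : A -> A) (U1 U2 P u1 u2 d1 d2 d12 : A) (c1 c2 : K) :
 U1 = c1 *: u1 -> U2 = c2 *: u2 -> U1 * U2 = P -> D P = (c1*c2) *: d12 ->
 d12 = u1 * d2 + u2 * d1 -> D U1 = c1 *: d1 -> D U2 = c2 *: d2 ->
 D (U1 * U2) = D U1 * U2 + U1 * D U2.
Proof.
move=> -> -> <- -> -> -> ->.
rewrite scalerDr -!scalerAl -!scalerAr !scalerA.
by rewrite addrC [d1 * _]mulrC.
Qed.

Section Der.
Variables (K : comNzRingType) (V : choiceType).
Local Notation A := {malg K[{cmonom V}]}.

Lemma malgUM (m1 m2 : {cmonom V}) : << (m1 * m2)%M >> = << m1 >> * << m2 >> :> A.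
Proof. by rewrite malgM_def fgmulUU mulr1. Qed.

Fact Dm_key : unit. Proof. by []. Qed.
Definition Dm_def (g : V -> A) (m : {cmonom V}) : A :=
  \sum_(v <- finsupp m) (<< divcm m (ucm v) >> * g v) *+ m v.
Definition Dm := locked_with Dm_key Dm_def.
Canonical Dm_unlockable := [unlockable fun Dm].
Lemma DmE g m : Dm g m = \sum_(v <- finsupp m) (<< divcm m (ucm v) >> * g v) *+ m v.
Proof. by rewrite unlock. Qed.
Definition Dg (g : V -> A) (p : A) : A := ext (fun m c => c *: Dm g m) p.

Variable g : V -> A.

Lemma DmEw (d : {fset V}) (m : {cmonom V}) : finsupp m `<=` d ->
  Dm g m = \sum_(v <- d) (<< divcm m (ucm v) >> * g v) *+ m v.
Proof.
move=> le; rewrite !DmE (big_fset_incl _ le) //= => x _.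
by rewrite -cmE_eq0 => /eqP ->.
Qed.

Lemma Dm1 : Dm g 1%M = 0.
Proof. by rewrite !DmE mdom1 big_seq_fset0. Qed.

Lemma DmU v : Dm g (ucm v) = g v.
Proof.
rewrite !DmE mdomU big_seq_fset1 cmUU.
have -> : divcm (ucm v) (ucm v) = 1%M.
  by apply/eqP/cmP => i; rewrite divcmE cm1 subnn.
by rewrite mul1r.
Qed.

Lemma divcmM (m1 m2 : {cmonom V}) v : (0 < m1 v)%N ->
  divcm (m1 * m2)%M (ucm v) = (divcm m1 (ucm v) * m2)%M.
Proof.
move=> h; apply/eqP/cmP => i; rewrite !(divcmE, cmM) cmU.
case: eqP => [<-|_]; last by rewrite !subn0.
by rewrite addnC -addnBA // addnC.
Qed.

Lemma abs1 (R : comPzRingType) (a b c x : R) n : a = b * c -> (a * x) *+ n = c * ((b * x) *+ n).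
Proof. by move=> ->; rewrite mulrnAr -mulrA mulrCA. Qed.
Lemma part1 (m1 m2 : {cmonom V}) v :
  (<< divcm (m1 * m2)%M (ucm v) >> * g v) *+ m1 v = << m2 >> * ((<< divcm m1 (ucm v) >> * g v) *+ m1 v).
Proof.
case: (posnP (m1 v)) => [E|h].
  by rewrite E [LHS]mulr0n [in X in _ = X]mulr0n mulr0.
have E1 := congr1 (fun m => << m >> : A) (divcmM m2 h).
have E2 := @malgUM (divcm m1 (ucm v)) m2.
have E := etrans E1 E2.
apply: abs1.
exact E.
Qed.
Lemma DmM_term (m1 m2 : {cmonom V}) v :
  (<< divcm (m1 * m2)%M (ucm v) >> * g v) *+ (m1 * m2)%M v =
  << m2 >> * ((<< divcm m1 (ucm v) >> * g v) *+ m1 v) + << m1 >> * ((<< divcm m2 (ucm v) >> * g v) *+ m2 v).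
Proof.
rewrite (cmM v m1 m2) [LHS]mulrnDr.
congr (_ + _); first exact: part1.
rewrite (mulmC m1 m2); exact: part1.
Qed.

Lemma DmM m1 m2 : Dm g (m1 * m2)%M = << m1 >> * Dm g m2 + << m2 >> * Dm g m1.
Proof.
have H : finsupp (m1 * m2)%M `<=` finsupp m1 `|` finsupp m2 by rewrite mdomD.
rewrite [LHS](DmEw H) [LHS](eq_bigr _ (fun v _ => DmM_term m1 m2 v)).
rewrite [LHS]big_split [LHS]addrC; congr (_ + _); rewrite -mulr_sumr; congr (_ * _); apply/esym/DmEw.
  exact: fsubsetUr.
exact: fsubsetUl.
Qed.



Lemma DgB : forall (k : {cmonom V}) (x y : K), (x - y) *: Dm g k = x *: Dm g k - y *: Dm g k.
Proof. by move=> k x y; rewrite scalerBl. Qed.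

Lemma DgU c m : Dg g << c *g m >> = c *: Dm g m.
Proof. exact: (extU DgB). Qed.

Lemma DgD p q : Dg g (p + q) = Dg g p + Dg g q.
Proof. exact: (extD DgB). Qed.

Lemma Dg0 : Dg g 0 = 0.
Proof. exact: ext0. Qed.

Lemma DgZ a p : Dg g (a *: p) = a *: Dg g p.
Proof. apply: (extZ DgB) => k a' c; by rewrite scalerA. Qed.

Lemma Dg_lin a p q : Dg g (a *: p + q) = a *: Dg g p + Dg g q.
Proof. by rewrite DgD DgZ. Qed.

Lemma DgUU v : Dg g << ucm v >> = g v.
Proof. by rewrite DgU DmU scale1r. Qed.

Lemma DgM p q : Dg g (p * q) = Dg g p * q + p * Dg g q.
Proof.
elim/malg_ind: p q => [|p1 p2 IH1 IH2|c1 m1] q.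
- exact: (@stepZ _ (Dg g) q Dg0).
- exact: (@stepL _ (Dg g) p1 p2 q DgD (IH1 q) (IH2 q)).
elim/malg_ind: q => [|q1 q2 IH1 IH2|c2 m2].
- exact: (@stepZr _ (Dg g) _ Dg0).
- exact: (@stepR _ (Dg g) _ q1 q2 DgD IH1 IH2).
have E : << c1 *g m1 >> * << c2 *g m2 >> = << c1 * c2 *g (m1 * m2)%M >> :> A := fgmulUU _ _ _ _.
exact: (@base_gen _ _ (Dg g) _ _ _ _ _ _ _ _ _ _ (monalgUZ c1 m1) (monalgUZ c2 m2) E (DgU _ _) (DmM m1 m2) (DgU c1 m1) (DgU c2 m2)).
Qed.


End Der.



Lemma gen_step (R : comPzRingType) (Phi : R -> R) U W DW GU DM :
  Phi (U * W) = Phi U * W + U * Phi W -> Phi W = DW -> Phi U = GU ->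
  DM = U * DW + W * GU -> Phi (U * W) = DM.
Proof. move=> h1 h2 h3 ->; rewrite h1 h2 h3 addrC; congr (_ + _); exact: mulrC. Qed.

Section DerEq.
Variables (K : comNzRingType) (V : choiceType).
Local Notation A := {malg K[{cmonom V}]}.

Lemma der_eq (Phi : A -> A) :
  (forall a p q, Phi (a *: p + q) = a *: Phi p + Phi q) ->
  (forall p q, Phi (p * q) = Phi p * q + p * Phi q) ->
  forall p, Phi p = Dg (fun v => Phi << ucm v >>) p.
Proof.
move=> Hl HM.
have Phi0 : Phi 0 = 0.
  have h := Hl 1 0 0; rewrite !scale1r !addr0 in h.
  by apply/(addrI (Phi 0)); rewrite addr0 -h.
have PhiD p q : Phi (p + q) = Phi p + Phi q by rewrite -{1}(scale1r p) Hl scale1r.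
have Phi1 : Phi 1 = 0.
  have h := HM 1 1; rewrite !mulr1 mul1r in h.
  by apply/(addrI (Phi 1)); rewrite addr0 -h.
set g := fun v => _.
have Hm : forall m, Phi << m >> = Dm g m.
  move=> m; elim: (mdeg m).+1 {-2}m (ltnSn (mdeg m)) => // n IH {}m hm.
  case: (eqVneq m 1%M) => [->|m1].
    by rewrite Dm1; exact: Phi1.
  have : finsupp m != fset0.
    apply: contra m1 => /eqP h; apply/cmP => i; rewrite cm1.
    by apply/eqP; rewrite cmE_eq0 h.
  case/fset0Pn => v hv.
  have mv : (0 < m v)%N by rewrite lt0n cmE_neq0.
  have em : m = (ucm v * divcm m (ucm v))%M.
    apply/eqP/cmP => i; rewrite cmM divcmE cmU.
    by case: eqP => [<-|_]; rewrite ?subn0 // addnC subnK.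
  have hd : (mdeg (divcm m (ucm v)) < n)%N.
    by move: hm; rewrite {1}em mdegM mdegU.
 
  rewrite em.
 
  rewrite [LHS](congr1 Phi (@malgUM K V _ _)).
 
  have E1 := DmM g (ucm v) (divcm m (ucm v)).
  have E2 := DmU g v.
  apply: (gen_step (HM _ _) (IH _ hd) erefl).
  exact: (etrans E1 (congr1 (fun t => << ucm v >> * Dm g (divcm m (ucm v)) + << divcm m (ucm v) >> * t) E2)).
move=> p; elim/malg_ind: p => [|p q Hp Hq|c m].
- by rewrite Phi0 Dg0.
- by rewrite PhiD Hp Hq DgD.
rewrite [RHS]DgU -(Hm m) (monalgUZ c m) -[X in Phi X]addr0 Hl Phi0 addr0.
by [].
Qed.

Lemma der_uniq (Phi Psi : A -> A) :
  (forall a p q, Phi (a *: p + q) = a *: Phi p + Phi q) ->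
  (forall p q, Phi (p * q) = Phi p * q + p * Phi q) ->
  (forall a p q, Psi (a *: p + q) = a *: Psi p + Psi q) ->
  (forall p q, Psi (p * q) = Psi p * q + p * Psi q) ->
  (forall v, Phi << ucm v >> = Psi << ucm v >>) ->
  forall p, Phi p = Psi p.
Proof.
move=> H1 H2 H3 H4 H p; rewrite (der_eq H1 H2 p) (der_eq H3 H4 p).
by apply: ext_eqF => k c; congr (_ *: _); rewrite !DmE; apply: eq_bigr => v _; rewrite H.
Qed.
End DerEq.

Lemma free12 (W : zmodType) (a b c d e f g i j k l m : W) :
  (a - b - (c - d)) + (e - f - (g - i)) + (j - k - (l - m)) =
  ((a - l) - (f - m)) + ((e - c) - (k - d)) + ((j - g) - (b - i)).
Proof.
rewrite !opprB !addrA.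
by rewrite [LHS](ACl (1*12*11*6*5*4*3*10*9*8*7*2)).
Qed.


Lemma monalgUZ2 (I : choiceType) (R : ringType) (c x : R) (k : I) :
  << c * x *g k >> = c *: << x *g k >>.
Proof. by apply/malgP => k'; rewrite mcoeffZ !mcoeffU mulrnAr. Qed.

Lemma swap_sub (W : zmodType) (a b c d : W) : a - b = c - d -> b - d = a - c.
Proof.
move=> e; have -> : a = c - d + b by rewrite -e subrK.
by rewrite [RHS]addrAC [c - d - c]addrAC subrr add0r addrC.
Qed.

Section Abstract.
Variables (K : fieldType) (R : comAlgType K) (I : choiceType).
Local Notation L := {malg R[I]}.
Variables (D : I -> R -> R) (M : I -> I -> L).
Hypothesis D_lin : forall k (a : K) f g, D k (a *: f + g) = a *: D k f + D k g.
Hypothesis D_der : forall k f g, D k (f * g) = D k f * g + f * D k g.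

Lemma D0 k : D k 0 = 0.
Proof.
have h := D_lin k 1 0 0; rewrite !scale1r !addr0 in h.
by apply/(addrI (D k 0)); rewrite addr0 -h.
Qed.
Lemma DD k f g : D k (f + g) = D k f + D k g.
Proof. by rewrite -{1}(scale1r f) D_lin scale1r. Qed.
Lemma DZ k (a : K) f : D k (a *: f) = a *: D k f.
Proof. by rewrite -[a *: f]addr0 D_lin D0 addr0. Qed.
Lemma DN k f : D k (- f) = - D k f.
Proof. by rewrite -scaleN1r DZ scaleN1r. Qed.
Lemma DB k f g : D k (f - g) = D k f - D k g.
Proof. by rewrite DD DN. Qed.
Lemma D1 k : D k 1 = 0.
Proof.
have h := D_der k 1 1; rewrite !mulr1 mul1r in h.
by apply/(addrI (D k 1)); rewrite addr0 -h.
Qed.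
Lemma DA k (a : K) : D k (a%:A) = 0.
Proof. by rewrite DZ D1 scaler0. Qed.

Definition rho_def (X : L) (f : R) : R := \sum_(k <- msupp X) X@_k * D k f.
Fact rho_key : unit. Proof. by []. Qed.
Definition rho := locked_with rho_key rho_def.
Lemma rho_unlock : rho = rho_def. Proof. exact: unlock. Qed.
Lemma rhoD X f : rho X f = \sum_(k <- msupp X) X@_k * D k f.
Proof. by rewrite rho_unlock. Qed.
Definition Nf (a : I) (Y : L) : L := ext (fun k2 c => << D a c *g k2 >> + c *: M a k2) Y.
Definition nab_def (X Y : L) : L :=
  \sum_(k1 <- msupp X) \sum_(k2 <- msupp Y) X@_k1 *: (<< D k1 Y@_k2 *g k2 >> + Y@_k2 *: M k1 k2).
Fact nab_key : unit. Proof. by []. Qed.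
Definition nab := locked_with nab_key nab_def.
Lemma nab_unlock : nab = nab_def. Proof. exact: unlock. Qed.
Lemma nabD X Y : nab X Y = \sum_(k1 <- msupp X) \sum_(k2 <- msupp Y) X@_k1 *: (<< D k1 Y@_k2 *g k2 >> + Y@_k2 *: M k1 k2).
Proof. by rewrite nab_unlock. Qed.

Lemma rhoE X f : rho X f = ext (fun k c => c * D k f) X.
Proof. by rewrite rhoD extE. Qed.
Lemma rho_FB f k x y : (x - y) * D k f = x * D k f - y * D k f.
Proof. exact: mulrBl. Qed.
Lemma rho_addl X Y f : rho (X + Y) f = rho X f + rho Y f.
Proof. by rewrite !rhoE (extD (rho_FB f)). Qed.
Lemma rho_Zl (c : R) X f : rho (c *: X) f = c * rho X f.
Proof.
rewrite !rhoE (extEw (rho_FB f) (msuppZ_le c X)) extE mulr_sumr.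
by apply: eq_bigr => k _; rewrite mcoeffZ mulrA.
Qed.
Lemma rho_lin (c : R) X Y f : rho (c *: X + Y) f = c * rho X f + rho Y f.
Proof. by rewrite rho_addl rho_Zl. Qed.
Lemma rho_0l f : rho 0 f = 0.
Proof. by rewrite rhoE ext0. Qed.
Lemma rho_subl X Y f : rho (X - Y) f = rho X f - rho Y f.
Proof. by rewrite rho_addl -scaleN1r rho_Zl mulN1r. Qed.
Lemma rho_der X f g : rho X (f * g) = rho X f * g + f * rho X g.
Proof.
rewrite !rhoD mulr_suml mulr_sumr -big_split /=; apply: eq_bigr => k _.
by rewrite D_der mulrDr mulrA [f * (_ * _)]mulrCA.
Qed.
Lemma rho_linr X (a : K) f g : rho X (a *: f + g) = a *: rho X f + rho X g.
Proof.
rewrite !rhoD scaler_sumr -big_split /=; apply: eq_bigr => k _.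
by rewrite D_lin mulrDr scalerAr.
Qed.
Lemma rho_addr X f g : rho X (f + g) = rho X f + rho X g.
Proof. by rewrite -{1}(scale1r f) rho_linr scale1r. Qed.
Lemma rho_subr X f g : rho X (f - g) = rho X f - rho X g.
Proof. by rewrite -scaleN1r addrC rho_linr scaleN1r addrC. Qed.
Lemma rhoU c a f : rho << c *g a >> f = c * D a f.
Proof. by rewrite rhoE (extU (rho_FB f)). Qed.
Lemma rho_basis a f : rho << a >> f = D a f.
Proof. by rewrite rhoU mul1r. Qed.
Lemma rhoA X (a : K) : rho X (a%:A) = 0.
Proof. by rewrite !rhoD big1 // => k _; rewrite DA mulr0. Qed.

Lemma N_FB a k x y :
  << D a (x - y) *g k >> + (x - y) *: M a k
  = (<< D a x *g k >> + x *: M a k) - (<< D a y *g k >> + y *: M a k).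
Proof. by rewrite DB monalgUB scalerBl opprD addrACA. Qed.
Lemma N_add a Y Z : Nf a (Y + Z) = Nf a Y + Nf a Z.
Proof. exact: (extD (N_FB a)). Qed.
Lemma NU a c b : Nf a << c *g b >> = << D a c *g b >> + c *: M a b.
Proof. exact: (extU (N_FB a)). Qed.
Lemma N_Z a f Y : Nf a (f *: Y) = D a f *: Y + f *: Nf a Y.
Proof.
rewrite /Nf (extEw (N_FB a) (msuppZ_le f Y)) extE.
rewrite [X in D a f *: X](monalgE Y) !scaler_sumr -big_split /=.
apply: eq_bigr => k _; rewrite mcoeffZ D_der monalgUD !monalgUZ2 scalerDr.
by rewrite -scalerA addrA.
Qed.

Lemma nabE X Y : nab X Y = ext (fun k1 c => c *: Nf k1 Y) X.
Proof. by rewrite nabD extE; apply: eq_bigr => k1 _; rewrite /Nf extE scaler_sumr. Qed.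
Lemma nab_FB Y k x y : (x - y) *: Nf k Y = x *: Nf k Y - y *: Nf k Y.
Proof. exact: scalerBl. Qed.
Lemma nab_addl X1 X2 Y : nab (X1 + X2) Y = nab X1 Y + nab X2 Y.
Proof. by rewrite !nabE (extD (nab_FB Y)). Qed.
Lemma nab_Zl f X Y : nab (f *: X) Y = f *: nab X Y.
Proof. by rewrite !nabE (extZ (nab_FB Y)) // => k a c; rewrite scalerA. Qed.
Lemma nab_addr X Y1 Y2 : nab X (Y1 + Y2) = nab X Y1 + nab X Y2.
Proof.
rewrite !nabE !extE -big_split /=; apply: eq_bigr => k _.
by rewrite N_add scalerDr.
Qed.
Lemma nab_Zr X f Y : nab X (f *: Y) = rho X f *: Y + f *: nab X Y.
Proof.
rewrite !nabE rhoE !extE scaler_suml scaler_sumr -big_split /=.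
apply: eq_bigr => k _; rewrite N_Z scalerDr !scalerA [f * _]mulrC.
by [].
Qed.
Lemma nabU c a Y : nab << c *g a >> Y = c *: Nf a Y.
Proof. by rewrite nabE (extU (nab_FB Y)). Qed.
Lemma nab_0l Y : nab 0 Y = 0.
Proof. by rewrite nabE ext0. Qed.
Lemma nab_0r X : nab X 0 = 0.
Proof.
have h := nab_addr X 0 0; rewrite addr0 in h.
by apply/(addrI (nab X 0)); rewrite addr0 -h.
Qed.
Lemma nab_subl X1 X2 Y : nab (X1 - X2) Y = nab X1 Y - nab X2 Y.
Proof. by rewrite nab_addl -scaleN1r nab_Zl scaleN1r. Qed.
Lemma nab_Nr X Y : nab X (- Y) = - nab X Y.
Proof.
by apply/eqP; rewrite -addr_eq0 -nab_addr addNr nab_0r.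
Qed.
Lemma nab_subr X Y1 Y2 : nab X (Y1 - Y2) = nab X Y1 - nab X Y2.
Proof. by rewrite nab_addr nab_Nr. Qed.
Lemma nab_basis a b : nab << a >> << b >> = M a b.
Proof. by rewrite nabU NU D1 monalgU0 add0r !scale1r. Qed.
Lemma nab_KZr X (a : K) Y : nab X (a%:A *: Y) = a%:A *: nab X Y.
Proof. by rewrite nab_Zr rhoA scale0r add0r. Qed.


Lemma rho_0r X : rho X 0 = 0.
Proof. by rewrite !rhoD big1 // => k _; rewrite D0 mulr0. Qed.

Lemma nabZZ f g A B : nab (f *: A) (g *: B) = f *: (rho A g *: B + g *: nab A B).
Proof. rewrite nab_Zl nab_Zr. reflexivity. Qed.
Lemma assoc_e3 h A B C : nab A (rho B h *: C + h *: nab B C) = rho A (rho B h) *: C + rho B h *: nab A C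
            + (rho A h *: nab B C + h *: nab A (nab B C)).
Proof. rewrite nab_addr !nab_Zr. reflexivity. Qed.
Lemma assoc_e4 g h A B C : nab (rho A g *: B + g *: nab A B) (h *: C) = rho A g *: (rho B h *: C + h *: nab B C)
           + g *: (rho (nab A B) h *: C + h *: nab (nab A B) C).
Proof. rewrite nab_addl !nab_Zl !nab_Zr. reflexivity. Qed.
Lemma assoc_fin (f g : R) (T P Q : L) : f *: (T + g *: P) - f *: (T + g *: Q) = (f * g) *: (P - Q).
Proof. by rewrite -scalerBr opprD addrACA subrr add0r -scalerBr scalerA. Qed.

Lemma assoc_formula f g h A B C :
  nab (f *: A) (nab (g *: B) (h *: C)) - nab (nab (f *: A) (g *: B)) (h *: C)
  = (f * g) *: ((rho A (rho B h) *: C + rho B h *: nab A C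
                 + (rho A h *: nab B C + h *: nab A (nab B C)))
                - (rho (nab A B) h *: C + h *: nab (nab A B) C)).
Proof.
rewrite (nabZZ g h B C) (nabZZ f g A B) nab_Zl nab_Zr assoc_e3 nab_Zl assoc_e4.
exact: assoc_fin.
Qed.

Lemma rearr (x y z w h : R) (C U V P Q : L) :
  (x *: C + y *: U + (z *: V + h *: P)) - (w *: C + h *: Q)
  = (x - w) *: C + (y *: U + z *: V) + h *: (P - Q).
Proof.
rewrite scalerBl scalerBr opprD !addrA.
by rewrite [LHS](ACl (1*5*2*3*4*6)).
Qed.

Hypothesis Hsym1 : forall a b f, D a (D b f) - rho (M a b) f = D b (D a f) - rho (M b a) f.
Hypothesis Hsym2 : forall a b c,
  nab << a >> (M b c) - nab (M a b) << c >> = nab << b >> (M a c) - nab (M b a) << c >>.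

Definition asc X Y Z := nab X (nab Y Z) - nab (nab X Y) Z.

Lemma fin_gen (s1 s2 : R) (C U V P1 P2 : L) (y z h : R) : s1 = s2 -> P1 = P2 ->
  s1 *: C + (y *: U + z *: V) + h *: P1 = s2 *: C + (z *: V + y *: U) + h *: P2.
Proof. move=> -> ->; rewrite [y *: U + _]addrC; reflexivity. Qed.

Lemma asc_sym_gen f g h A B C :
  rho A (rho B h) - rho (nab A B) h = rho B (rho A h) - rho (nab B A) h ->
  nab A (nab B C) - nab (nab A B) C = nab B (nab A C) - nab (nab B A) C ->
  asc (f *: A) (g *: B) (h *: C) = asc (g *: B) (f *: A) (h *: C).
Proof.
move=> H1 H2; rewrite /asc [LHS]assoc_formula [RHS]assoc_formula [g * f]mulrC.
rewrite [in LHS]rearr [in RHS]rearr.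
apply: (f_equal (fun t => (f * g) *: t)).
apply: fin_gen; [exact: H1 | exact: H2].
Qed.

Lemma hs1_gen (ra rb rab rba Da Db Rab Rba : R -> R) h :
  ra =1 Da -> rb =1 Db -> rab =1 Rab -> rba =1 Rba ->
  Da (Db h) - Rab h = Db (Da h) - Rba h -> ra (rb h) - rab h = rb (ra h) - rba h.
Proof. by move=> e1 e2 e3 e4; rewrite !e1 !e2 !e3 !e4. Qed.

Lemma hs2_gen (A B C bc ab ac ba bc' ab' ac' ba' : L) :
  bc = bc' -> ab = ab' -> ac = ac' -> ba = ba' ->
  nab A bc' - nab ab' C = nab B ac' - nab ba' C ->
  nab A bc - nab ab C = nab B ac - nab ba C.
Proof. by move=> -> -> -> ->. Qed.

Lemma HS1 a b h :
  rho << a >> (rho << b >> h) - rho (nab << a >> << b >>) h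
  = rho << b >> (rho << a >> h) - rho (nab << b >> << a >>) h.
Proof.
exact: (hs1_gen (rho_basis a) (rho_basis b)
   (fun x => congr1 (fun X => rho X x) (nab_basis a b))
   (fun x => congr1 (fun X => rho X x) (nab_basis b a)) (Hsym1 a b h)).
Qed.

Lemma HS2 a b c :
  nab << a >> (nab << b >> << c >>) - nab (nab << a >> << b >>) << c >>
  = nab << b >> (nab << a >> << c >>) - nab (nab << b >> << a >>) << c >>.
Proof.
exact: (hs2_gen (nab_basis b c) (nab_basis a b) (nab_basis a c) (nab_basis b a) (Hsym2 a b c)).
Qed.

Lemma transp_asc X Y Z X' Y' Z' : X = X' -> Y = Y' -> Z = Z' ->
  asc X' Y' Z' = asc Y' X' Z' -> asc X Y Z = asc Y X Z.
Proof. by move=> -> -> ->. Qed.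

Lemma asc_basis f g h a b c :
  asc << f *g a >> << g *g b >> << h *g c >> = asc << g *g b >> << f *g a >> << h *g c >>.
Proof.
apply: (transp_asc (monalgUZ f a) (monalgUZ g b) (monalgUZ h c)).
exact: (asc_sym_gen f g (HS1 a b h) (HS2 a b c)).
Qed.

Lemma asc_addl X1 X2 Y Z : asc (X1 + X2) Y Z = asc X1 Y Z + asc X2 Y Z.
Proof. by rewrite /asc !nab_addl opprD addrACA. Qed.
Lemma asc_addm X Y1 Y2 Z : asc X (Y1 + Y2) Z = asc X Y1 Z + asc X Y2 Z.
Proof. by rewrite /asc !(nab_addl, nab_addr) opprD addrACA. Qed.
Lemma asc_addr X Y Z1 Z2 : asc X Y (Z1 + Z2) = asc X Y Z1 + asc X Y Z2.
Proof. by rewrite /asc !nab_addr opprD addrACA. Qed.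
Lemma asc_0l Y Z : asc 0 Y Z = 0.
Proof. by rewrite /asc !nab_0l subrr. Qed.
Lemma asc_0m X Z : asc X 0 Z = 0.
Proof. by rewrite /asc nab_0l nab_0r nab_0l subrr. Qed.
Lemma asc_0r X Y : asc X Y 0 = 0.
Proof. by rewrite /asc !nab_0r subrr. Qed.

Lemma asc_sym X Y Z : asc X Y Z = asc Y X Z.
Proof.
elim/malg_ind: X Y Z => [|X1 X2 IH1 IH2|f a] Y Z.
- by rewrite asc_0l asc_0m.
- by rewrite asc_addl asc_addm (IH1 Y Z) (IH2 Y Z).
elim/malg_ind: Y Z => [|Y1 Y2 IH1 IH2|g b] Z.
- by rewrite asc_0l asc_0m.
- by rewrite asc_addl asc_addm (IH1 Z) (IH2 Z).
elim/malg_ind: Z => [|Z1 Z2 IH1 IH2|h c].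
- by rewrite !asc_0r.
- by rewrite !asc_addr IH1 IH2.
exact: asc_basis.
Qed.

Lemma rho_formula f g A B h :
  rho (f *: A) (rho (g *: B) h) - rho (nab (f *: A) (g *: B)) h
  = (f * g) * (rho A (rho B h) - rho (nab A B) h).
Proof.
rewrite (nabZZ f g A B) !rho_Zl rho_addl !rho_Zl rho_der.
by rewrite -mulrBr opprD addrACA subrr add0r -mulrBr mulrA.
Qed.

Definition rq h X Y := rho X (rho Y h) - rho (nab X Y) h.

Lemma rq_addl h X1 X2 Y : rq h (X1 + X2) Y = rq h X1 Y + rq h X2 Y.
Proof. by rewrite /rq !(rho_addl, nab_addl) opprD addrACA. Qed.
Lemma rq_addr h X Y1 Y2 : rq h X (Y1 + Y2) = rq h X Y1 + rq h X Y2.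
Proof. by rewrite /rq !(rho_addl, rho_addr, nab_addr) opprD addrACA. Qed.
Lemma rq_0l h Y : rq h 0 Y = 0.
Proof. by rewrite /rq !(rho_0l, nab_0l) subrr. Qed.
Lemma rq_0r h X : rq h X 0 = 0.
Proof. by rewrite /rq rho_0l rho_0r nab_0r rho_0l subrr. Qed.
Lemma rq_sym_gen h f g A B : rq h A B = rq h B A -> rq h (f *: A) (g *: B) = rq h (g *: B) (f *: A).
Proof. move=> H; rewrite /rq in H *; rewrite [LHS]rho_formula [RHS]rho_formula [g * f]mulrC H; reflexivity. Qed.
Lemma transp_rq h X Y X' Y' : X = X' -> Y = Y' -> rq h X' Y' = rq h Y' X' -> rq h X Y = rq h Y X.
Proof. by move=> -> ->. Qed.

Lemma rq_sym h X Y : rq h X Y = rq h Y X.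
Proof.
elim/malg_ind: X Y => [|X1 X2 IH1 IH2|f a] Y.
- by rewrite rq_0l rq_0r.
- by rewrite rq_addl rq_addr (IH1 Y) (IH2 Y).
elim/malg_ind: Y => [|Y1 Y2 IH1 IH2|g b].
- by rewrite rq_0l rq_0r.
- by rewrite rq_addl rq_addr IH1 IH2.
apply: (transp_rq (monalgUZ f a) (monalgUZ g b)).
exact: (@rq_sym_gen h f g _ _ (HS1 a b h)).
Qed.

Lemma jacobi_free (W : zmodType) (op : W -> W -> W) :
  (forall x y z, op (x - y) z = op x z - op y z) ->
  (forall x y z, op x (y - z) = op x y - op x z) ->
  (forall x y z, op x (op y z) - op (op x y) z = op y (op x z) - op (op y x) z) ->
  forall x y z, op x (op y z - op z y) - op (op y z - op z y) x
    + (op y (op z x - op x z) - op (op z x - op x z) y)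
    + (op z (op x y - op y x) - op (op x y - op y x) z) = 0.
Proof.
move=> Hl Hr HP x y z; rewrite !(Hl, Hr) free12.
by rewrite (HP x y z) (HP y z x) (HP z x y) !subrr !addr0.
Qed.

Theorem abstract_plr : pre_Lie_Rinehart rho nab.
Proof.
split.
- move=> X; split; [exact: rho_linr | exact: rho_der].
- exact: rho_lin.
- by move=> X a Y Z; rewrite /Kscale nab_addr nab_KZr.
- move=> a X Y Z; rewrite /bracket /Kscale nab_addl nab_Zl nab_addr nab_KZr.
  by rewrite scalerBr opprD addrACA.
- move=> a X Y Z; rewrite /bracket /Kscale nab_addr nab_KZr nab_addl nab_Zl.
  by rewrite scalerBr opprD addrACA.
- by move=> X; rewrite /bracket subrr.
- move=> X Y Z; rewrite /bracket; apply: jacobi_free.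
  + exact: nab_subl.
  + exact: nab_subr.
  + move=> x y z; exact: asc_sym.
- move=> X Y f; rewrite /bracket rho_subl.
  apply: swap_sub; exact: (rq_sym f X Y).
- by move=> X f Y; rewrite /bracket nab_Zr nab_Zl scalerBr addrA.
- move=> X Y Z; exact: asc_sym.
Qed.
End Abstract.


Lemma algM' (K : nzRingType) (A : lalgType K) (b c : K) : (b * c)%:A = b%:A * c%:A :> A.
Proof. by rewrite -scalerAl mul1r scalerA. Qed.

Section Weights.
Variable (C : finType).
Local Notation mon := {cmonom (var C)}.

Lemma wtEw (d : {fset var C}) (m : mon) : finsupp m `<=` d ->
  wt m = \sum_(v <- d) (m v)%:Z * ((v.2)%:Z - 1).
Proof.
move=> le; rewrite /wt (big_fset_incl _ le) //= => x _.
by rewrite -cmE_eq0 => /eqP ->; rewrite mul0r.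
Qed.

Lemma wtM (m1 m2 : mon) : wt (m1 * m2)%M = wt m1 + wt m2.
Proof.
have H : finsupp (m1 * m2)%M `<=` finsupp m1 `|` finsupp m2 by rewrite mdomD.
rewrite (wtEw H) (@wtEw _ m1 (fsubsetUl _ (finsupp m2))) (@wtEw _ m2 (fsubsetUr (finsupp m1) _)).
rewrite -big_split; apply: eq_bigr => v _.
by rewrite (cmM v m1 m2) PoszD mulrDl.
Qed.

Lemma wtU (v : var C) : wt (ucm v) = (v.2)%:Z - 1.
Proof. by rewrite /wt mdomU big_seq_fset1 cmUU mul1r. Qed.

Lemma wt1 : wt (1%M : mon) = 0.
Proof. by rewrite /wt mdom1 big_seq_fset0. Qed.

Lemma cm_split (m : mon) v : v \in finsupp m -> m = (ucm v * divcm m (ucm v))%M.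
Proof.
move=> hv; have mv : (0 < m v)%N by rewrite lt0n cmE_neq0.
apply/eqP/cmP => i; rewrite cmM divcmE cmU.
by case: eqP => [<-|_]; rewrite ?subn0 // addnC subnK.
Qed.
End Weights.


Section ExtLin.
Variables (I : choiceType) (K : ringType) (W : zmodType) (sc : K -> W -> W).
Hypothesis scD : forall a x y, sc a (x + y) = sc a x + sc a y.
Hypothesis sc0 : forall a, sc a 0 = 0.
Variable F : I -> K -> W.
Hypothesis FB : forall k x y, F k (x - y) = F k x - F k y.
Hypothesis FZ : forall k a c, F k (a * c) = sc a (F k c).
Lemma ext_linS a (p q : {malg K[I]}) : ext F (a *: p + q) = sc a (ext F p) + ext F q.
Proof.
rewrite (extD FB); congr (_ + _).
rewrite (extEw FB (msuppZ_le a p)) extE.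
rewrite (big_morph (sc a) (scD a) (sc0 a)).
by apply: eq_bigr => m _; rewrite mcoeffZ FZ.
Qed.
End ExtLin.

Lemma transp_lin (X W : zmodType) (S : Type) (sc1 : S -> X -> X) (sc2 : S -> W -> W) (F G : X -> W) :
  F =1 G -> (forall a x y, G (sc1 a x + y) = sc2 a (G x) + G y) ->
  forall a x y, F (sc1 a x + y) = sc2 a (F x) + F y.
Proof. by move=> e h a x y; rewrite !e. Qed.

Section Homog.
Variables (K : fieldType) (C : finType).
Local Notation mon := {cmonom (var C)}.
Local Notation N := (Nbar K C).

Definition homog (w : int) (p : N) := forall m, m \in msupp p -> wt m = w.

Lemma homog0 w : homog w 0.
Proof. by move=> m; rewrite msupp0 in_fset0. Qed.
Lemma homogD w p q : homog w p -> homog w q -> homog w (p + q).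
Proof.
move=> hp hq m /(fsubsetP (msuppD_le _ _)); rewrite in_fsetU => /orP[]; [exact: hp|exact: hq].
Qed.
Lemma homogZ w (c : K) p : homog w p -> homog w (c *: p).
Proof. by move=> hp m /(fsubsetP (msuppZ_le _ _)); exact: hp. Qed.
Lemma homogMn w p n : homog w p -> homog w (p *+ n).
Proof. by move=> hp m /(fsubsetP (msuppMn_le _ _)); exact: hp. Qed.
Lemma homog_sum w (r : seq (var C)) (F : var C -> N) :
  (forall v, homog w (F v)) -> homog w (\sum_(v <- r) F v).
Proof. by move=> h; elim/big_ind: _ => //; [exact: homog0 | exact: homogD]. Qed.
Lemma homogU1 (m : mon) : homog (wt m) << m >>.
Proof. by move=> m'; rewrite msuppU1 in_fset1 => /eqP ->. Qed.
Lemma homogM w1 w2 p q : homog w1 p -> homog w2 q -> homog (w1 + w2) (p * q).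
Proof.
move=> hp hq m /msuppM_le [m1 [m2 [h1 h2 ->]]].
by rewrite wtM (hp _ h1) (hq _ h2).
Qed.

Definition gd (v : var C) : N := << ucm (shiftv v) >>.

Lemma deriv_Dg (p : N) : Defs.deriv p = Dg gd p.
Proof.
rewrite /Defs.deriv /Dg extE; apply: eq_bigr => m _; apply: f_equal.
rewrite DmE /dmon; apply: eq_bigr => v _; apply: (f_equal (fun x => x *+ _)).
exact: (@malgUM K _ (divcm m (ucm v)) (ucm (shiftv v))).
Qed.

Lemma homog_Dm (m : mon) : homog (wt m + 1) (Dm gd m).
Proof.
rewrite DmE; apply: homog_sum => v.
case: (boolP (v \in finsupp m)) => hv; last first.
  by rewrite -cmE_eq0 in hv; rewrite (eqP hv) mulr0n; exact: homog0.
apply: homogMn.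
have := homogM (@homogU1 (divcm m (ucm v))) (@homogU1 (ucm (shiftv v))).
have e : wt (divcm m (ucm v)) + wt (ucm (shiftv v)) = wt m + 1.
  rewrite {2}(cm_split hv) wtM !wtU /shiftv /=; lia.
by rewrite e.
Qed.

Lemma homog_derivU (m : mon) : homog (wt m + 1) (Defs.deriv << m >>).
Proof. by rewrite deriv_Dg DgU scale1r; exact: homog_Dm. Qed.

Lemma derivU1 : Defs.deriv (<< (1%M : mon) >> : N) = 0.
Proof. by rewrite deriv_Dg DgU Dm1 scaler0. Qed.

Definition T1 (m : mon) : multiaroma K C :=
  if (insub m : option (M0mon C)) is Some m0 then << ucm m0 >> else 0.
Lemma toS1_ext (p : N) : toS1 p = ext (fun m c => c *: T1 m) p.
Proof. by rewrite extE. Qed.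
Lemma T1_FB m x y : (x - y) *: T1 m = x *: T1 m - y *: T1 m.
Proof. exact: scalerBl. Qed.
Lemma toS1_lin (a : K) (p q : N) : toS1 (a *: p + q) = a *: toS1 p + toS1 q.
Proof.
apply: (transp_lin (sc1 := fun a (x : N) => a *: x) (sc2 := fun a (x : multiaroma K C) => a *: x) toS1_ext).
move=> a' x y; apply: (ext_linS (sc := fun a (x : multiaroma K C) => a *: x)).
- by move=> ? ? ?; rewrite scalerDr.
- by move=> ?; rewrite scaler0.
- exact: T1_FB.
- by move=> ? ? ?; rewrite scalerA.
Qed.
Lemma toS1U (m : mon) : toS1 (<< m >> : N) = T1 m.
Proof. by rewrite toS1_ext (extU T1_FB) scale1r. Qed.
Lemma toS1_0 : toS1 (0 : N) = 0.
Proof. by rewrite toS1_ext ext0. Qed.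
Lemma toS1B (p q : N) : toS1 (p - q) = toS1 p - toS1 q.
Proof. by rewrite !toS1_ext (extB T1_FB). Qed.

Lemma toS1_homog w (p : N) : homog w p -> w != 0 -> toS1 p = 0.
Proof.
move=> hp hw; rewrite /toS1 big1_seq // => m /andP[_ hm].
rewrite insubF ?scaler0 // /is_M0mon (hp _ hm).
by rewrite (negbTE hw).
Qed.

Definition L1f (m : mon) (c : K) : AM K C :=
  if (insub m : option (Mm1mon C)) is Some m1 then << c%:A *g m1 >> else 0.
Lemma toL1_ext (p : N) : toL1 p = ext L1f p.
Proof. by rewrite extE. Qed.
Lemma L1f_FB m x y : L1f m (x - y) = L1f m x - L1f m y.
Proof. rewrite /L1f; case: insub => [m1|]; last by rewrite subrr.
exact: (etrans (f_equal (fun c => << c *g m1 >> : AM K C) (scalerBl x y (1 : multiaroma K C))) (monalgUB _ _ _)). Qed.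
Lemma toL1_lin (a : K) (p q : N) : toL1 (a *: p + q) = a%:A *: toL1 p + toL1 q.
Proof.
apply: (transp_lin (sc1 := fun a (x : N) => a *: x) (sc2 := fun a (x : AM K C) => a%:A *: x) toL1_ext).
move=> a' x y; apply: (ext_linS (sc := fun a (x : AM K C) => a%:A *: x)).
- by move=> ? ? ?; rewrite scalerDr.
- by move=> ?; rewrite scaler0.
- exact: L1f_FB.
- move=> m b c; rewrite /L1f; case: insub => [m1|]; last by rewrite scaler0.
  exact: (etrans (f_equal (fun t => << t *g m1 >> : AM K C) (algM' _ b c)) (monalgUZ2 _ _ _)).
Qed.
Lemma toL1U (m : mon) : toL1 (<< m >> : N) = L1f m 1.
Proof. by rewrite toL1_ext (extU L1f_FB). Qed.
Lemma toL1B (p q : N) : toL1 (p - q) = toL1 p - toL1 q.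
Proof. by rewrite !toL1_ext (extB L1f_FB). Qed.

Lemma toL1_homog w (p : N) : homog w p -> w != -1 -> toL1 p = 0.
Proof.
move=> hp hw; rewrite /toL1 big1_seq // => m /andP[_ hm].
by rewrite insubF // /is_Mm1mon (hp _ hm) (negbTE hw).
Qed.

End Homog.


Lemma malg_lin_eq (I : choiceType) (K : ringType) (Y : zmodType) (sc : K -> Y -> Y)
  (sc1 : forall y, sc 1 y = y) (F G : {malg K[I]} -> Y) :
  (forall a x y, F (a *: x + y) = sc a (F x) + F y) ->
  (forall a x y, G (a *: x + y) = sc a (G x) + G y) ->
  (forall m, F << m >> = G << m >>) -> forall p, F p = G p.
Proof.
move=> hF hG hU.
have F0 : F 0 = 0.
  have h := hF 1 0 0; rewrite scale1r addr0 sc1 in h.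
  by apply/(addrI (F 0)); rewrite addr0 -h.
have G0 : G 0 = 0.
  have h := hG 1 0 0; rewrite scale1r addr0 sc1 in h.
  by apply/(addrI (G 0)); rewrite addr0 -h.
have FD p q : F (p + q) = F p + F q by have := hF 1 p q; rewrite scale1r sc1.
have GD p q : G (p + q) = G p + G q by have := hG 1 p q; rewrite scale1r sc1.
elim/malg_ind => [|p q hp hq|c m]; first by rewrite F0 G0.
  by rewrite FD GD hp hq.
have -> : << c *g m >> = c *: << m >> + 0 by rewrite addr0 monalgUZ.
by rewrite hF hG F0 G0 hU.
Qed.

Lemma lin_comp (X Y Z : zmodType) (S : Type) (s1 : S -> X -> X) (s2 : S -> Y -> Y) (s3 : S -> Z -> Z)
  (T : X -> Y) (U : Y -> Z) :
  (forall a x y, T (s1 a x + y) = s2 a (T x) + T y) ->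
  (forall a x y, U (s2 a x + y) = s3 a (U x) + U y) ->
  forall a x y, U (T (s1 a x + y)) = s3 a (U (T x)) + U (T y).
Proof. by move=> h1 h2 a x y; rewrite h1 h2. Qed.

Lemma transp_der (A : ringType) (F G : A -> A) : F =1 G ->
  (forall f g, G (f * g) = G f * g + f * G g) -> forall f g, F (f * g) = F f * g + f * F g.
Proof. by move=> e h f g; rewrite !e. Qed.

Lemma comm_der (A : ringType) (F1 F2 : A -> A) :
  (forall x y, F1 (x + y) = F1 x + F1 y) -> (forall x y, F2 (x + y) = F2 x + F2 y) ->
  (forall f g, F1 (f * g) = F1 f * g + f * F1 g) ->
  (forall f g, F2 (f * g) = F2 f * g + f * F2 g) ->
  forall f g, F1 (F2 (f * g)) - F2 (F1 (f * g))
    = (F1 (F2 f) - F2 (F1 f)) * g + f * (F1 (F2 g) - F2 (F1 g)).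
Proof.
move=> a1 a2 d1 d2 f g; rewrite d2 d1 a1 a2 !d1 !d2 mulrBl mulrBr !opprD !addrA.
rewrite [LHS](ACl (1*5*4*8*3*6*2*7)) /=. by rewrite !addrK.
Qed.

Lemma gen_core (Nr : comPzRingType) (Dr : Nr -> Nr) (a b x : Nr) :
  Dr (b * x) = Dr b * x + b * Dr x ->
  a * Dr (b * x) - (a * Dr b) * x = a * b * Dr x.
Proof. by move=> ->; rewrite mulrDr !mulrA addrAC subrr add0r. Qed.

Lemma gen2 (Nr : comPzRingType) (W : zmodType) (T : Nr -> W)
  (TB : forall x y, T (x - y) = T x - T y) (Dr : Nr -> Nr) (a b x : Nr) (n1 n2 n3 n4 : W) :
  Dr (b * x) = Dr b * x + b * Dr x -> Dr (a * x) = Dr a * x + a * Dr x ->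
  n1 = T (a * Dr (b * x)) -> n2 = T ((a * Dr b) * x) ->
  n3 = T (b * Dr (a * x)) -> n4 = T ((b * Dr a) * x) ->
  n1 - n2 = n3 - n4.
Proof.
move=> h1 h2 -> -> -> ->; rewrite -!TB (gen_core a h1) (gen_core b h2).
by rewrite [a * b]mulrC.
Qed.

Lemma swap2 (W : zmodType) (a b c d : W) : a - b = c - d -> a - c = b - d.
Proof.
move=> e; have -> : a = c - d + b by rewrite -e subrK.
by rewrite addrAC [c - d - c]addrAC subrr add0r addrC.
Qed.

Section Concrete.
Variables (K : fieldType) (C : finType).
Local Notation N := (Nbar K C).
Local Notation R := (multiaroma K C).
Local Notation L := (AM K C).
Local Notation I := (Mm1mon C).
Local Notation DD := (@act_S K C).
Local Notation MM := (@act_mon1 K C).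

Lemma act_S_Dg k (f : R) : act_S k f = Dg (@act_mon0 K C k) f.
Proof.
rewrite /act_S /Dg extE; apply: eq_bigr => y _; apply: f_equal.
by rewrite DmE.
Qed.

Lemma D_linC : forall k (a : K) (f g : R), DD k (a *: f + g) = a *: DD k f + DD k g.
Proof.
move=> k; apply: (transp_lin (sc1 := fun (a : K) (x : R) => a *: x) (sc2 := fun (a : K) (x : R) => a *: x) (act_S_Dg k)).
exact: Dg_lin.
Qed.

Lemma D_derC : forall k (f g : R), DD k (f * g) = DD k f * g + f * DD k g.
Proof. move=> k; apply: (transp_der (act_S_Dg k)); exact: DgM. Qed.

Lemma D_addC k (x y : R) : DD k (x + y) = DD k x + DD k y.
Proof. by have := D_linC k 1 x y; rewrite !scale1r. Qed.

Lemma deriv_lin (a : K) (p q : N) : Defs.deriv (a *: p + q) = a *: Defs.deriv p + Defs.deriv q.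
Proof.
apply: (transp_lin (sc1 := fun (a : K) (x : N) => a *: x) (sc2 := fun (a : K) (x : N) => a *: x) (@deriv_Dg K C)).
exact: Dg_lin.
Qed.

Lemma deriv_der (p q : N) : Defs.deriv (p * q) = Defs.deriv p * q + p * Defs.deriv q.
Proof. apply: (transp_der (@deriv_Dg K C)); exact: DgM. Qed.

Lemma actS_gen (b : I) (k : M0mon C) : act_S b (<< ucm k >> : R) = toS1 ((<< val b >> : N) * Defs.deriv (<< val k >> : N)).
Proof. rewrite act_S_Dg DgUU. reflexivity. Qed.

Lemma wt_m1 (a : I) : wt (val a) = -1.
Proof. exact/eqP/(valP a). Qed.
Lemma wt_0 (k : M0mon C) : wt (val k) = 0.
Proof. by have /andP[/eqP] := valP k. Qed.

Lemma C1 (a : I) (p : N) : act_S a (toS1 p) = toS1 (<< val a >> * Defs.deriv p).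
Proof.
move: p; apply: (malg_lin_eq (sc := fun (c : K) (x : R) => c *: x)).
- exact: scale1r.
- apply: (lin_comp (s2 := fun (c : K) (x : R) => c *: x)); first exact: toS1_lin.
  exact: D_linC.
- move=> c x y; rewrite deriv_lin mulrDr -scalerAr; exact: toS1_lin.
move=> m; rewrite [in LHS]toS1U /T1; case: insubP => [m0 hm0 <-|hn].
  exact: actS_gen.
rewrite act_S_Dg Dg0; apply/esym.
case: (eqVneq m 1%M) => [->|m1]; first by rewrite derivU1 mulr0 toS1_0.
apply: (toS1_homog (homogM (@homogU1 K C (val a)) (@homog_derivU K C m))).
rewrite wt_m1; move: hn; rewrite /is_M0mon m1 andbT => hw.
apply: contra hw => /eqP h; apply/eqP; lia.
Qed.

Lemma C2 (k : M0mon C) (q : N) : rho DD (toL1 q) << ucm k >> = toS1 (q * Defs.deriv (<< val k >> : N)).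
Proof.
move: q; apply: (malg_lin_eq (sc := fun (c : K) (x : R) => c *: x)).
- exact: scale1r.
- move=> c x y; rewrite toL1_lin rho_lin mulr_algl; reflexivity.
- move=> c x y; rewrite mulrDl -scalerAl; exact: toS1_lin.
move=> m; rewrite [in LHS]toL1U /L1f; case: insubP => [m1 hm1 <-|hn].
  rewrite rhoU scale1r mul1r; exact: actS_gen.
rewrite rho_0l; apply/esym.
apply: (toS1_homog (homogM (@homogU1 K C m) (@homog_derivU K C (val k)))).
rewrite wt_0; move: hn; rewrite /is_Mm1mon => hw.
apply: contra hw => /eqP h; apply/eqP; lia.
Qed.

Lemma C5_F (a : I) (c : K) (x y : N) :
  nab DD MM << a >> (toL1 (c *: x + y)) = c%:A *: nab DD MM << a >> (toL1 x) + nab DD MM << a >> (toL1 y).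
Proof.
rewrite toL1_lin (nab_addr MM D_linC).
exact: (f_equal2 (fun u v => u + v) (nab_KZr MM D_linC D_derC _ _ _) erefl).
Qed.
Lemma C5_G (a : I) (c : K) (x y : N) :
  toL1 (<< val a >> * Defs.deriv (c *: x + y)) = c%:A *: toL1 (<< val a >> * Defs.deriv x) + toL1 (<< val a >> * Defs.deriv y).
Proof. rewrite deriv_lin mulrDr -scalerAr; exact: toL1_lin. Qed.

Lemma C5 (a : I) (q : N) : nab DD MM << a >> (toL1 q) = toL1 (<< val a >> * Defs.deriv q).
Proof.
move: q; apply: (malg_lin_eq (sc := fun (c : K) (x : L) => c%:A *: x)).
- by move=> y; rewrite scale1r scale1r.
- exact: C5_F.
- exact: C5_G.
move=> m; rewrite [in LHS]toL1U /L1f; case: insubP => [m1 hm1 <-|hn].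
  rewrite scale1r (nab_basis MM D_linC D_derC); reflexivity.
rewrite (nab_0r MM D_linC); apply/esym.
apply: (toL1_homog (homogM (@homogU1 K C (val a)) (@homog_derivU K C m))).
rewrite wt_m1; move: hn; rewrite /is_Mm1mon => hw.
apply: contra hw => /eqP h; apply/eqP; lia.
Qed.

Lemma C6_F (c0 : I) (b : K) (x y : N) :
  nab DD MM (toL1 (b *: x + y)) << c0 >> = b%:A *: nab DD MM (toL1 x) << c0 >> + nab DD MM (toL1 y) << c0 >>.
Proof. rewrite toL1_lin nab_addl nab_Zl; reflexivity. Qed.
Lemma C6_G (c0 : I) (b : K) (x y : N) :
  toL1 ((b *: x + y) * Defs.deriv (<< val c0 >> : N)) = b%:A *: toL1 (x * Defs.deriv (<< val c0 >> : N)) + toL1 (y * Defs.deriv (<< val c0 >> : N)).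
Proof. rewrite mulrDl -scalerAl; exact: toL1_lin. Qed.

Lemma C6 (c : I) (q : N) : nab DD MM (toL1 q) << c >> = toL1 (q * Defs.deriv (<< val c >> : N)).
Proof.
move: q; apply: (malg_lin_eq (sc := fun (c : K) (x : L) => c%:A *: x)).
- by move=> y; rewrite scale1r scale1r.
- exact: C6_F.
- exact: C6_G.
move=> m; rewrite [in LHS]toL1U /L1f; case: insubP => [m1 hm1 <-|hn].
  rewrite scale1r (nab_basis MM D_linC D_derC); reflexivity.
rewrite nab_0l; apply/esym.
apply: (toL1_homog (homogM (@homogU1 K C m) (@homog_derivU K C (val c)))).
rewrite wt_m1; move: hn; rewrite /is_Mm1mon => hw.
apply: contra hw => /eqP h; apply/eqP; lia.
Qed.

Lemma Hsym2C (a b c : I) :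
  nab DD MM << a >> (MM b c) - nab DD MM (MM a b) << c >>
  = nab DD MM << b >> (MM a c) - nab DD MM (MM b a) << c >>.
Proof.
exact: (gen2 (@toL1B K C) (deriv_der _ _) (deriv_der _ _)
          (C5 a _) (C6 c _) (C5 b _) (C6 c _)).
Qed.

Lemma Hsym1C (a b : I) (f : R) :
  DD a (DD b f) - rho DD (MM a b) f = DD b (DD a f) - rho DD (MM b a) f.
Proof.
apply: swap2; rewrite -rho_subl.
move: f; apply: der_uniq.
- move=> c p q; rewrite !D_linC scalerBr opprD addrACA; reflexivity.
- exact: (comm_der (D_addC a) (D_addC b) (D_derC a) (D_derC b)).
- exact: (rho_linr D_linC).
- exact: (rho_der D_derC).
move=> k; rewrite rho_subl; apply: swap2.
apply: (gen2 (@toS1B K C) (deriv_der _ _) (deriv_der _ _)).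
- exact: (etrans (f_equal (act_S a) (actS_gen b k)) (C1 a _)).
- exact: C2.
- exact: (etrans (f_equal (act_S b) (actS_gen a k)) (C1 b _)).
- exact: C2.
Qed.

End Concrete.

Unset Implicit Arguments.
Theorem proposition3p1 (K : fieldType) (C : finType) :
  @pre_Lie_Rinehart K (multiaroma K C) (AM K C)
    (@rhoAM K C) (@nablaAM K C).
Proof.
have H := abstract_plr (@D_linC K C) (@D_derC K C) (@Hsym1C K C) (@Hsym2C K C).
rewrite rho_unlock nab_unlock in H.
exact: H.
Qed.
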